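(* Let $n\geq 3$ and let $(\mathbb{R}^n,g)$ be the pseudo-Euclidean space with Cartesian coordinates $x=(x_1,\dots,x_n)$ and metric components $g_{ij}=\delta_{ij}\varepsilon_i$, $1\le i,j\le n$, where $\varepsilon_i=\pm1$. Let $\Omega\subseteq\mathbb{R}^n$ be open and let $\varphi>0$, $N>0$ and $\psi$ be smooth functions on $\Omega$. Then $(\Omega,\bar g,N,\psi)$ with $\bar g=g/\varphi^2$ is an electrostatic system if and only if $\varphi,\psi,N$ satisfy: for all $i\neq j$, $$(n-2)N\varphi_{,ij}-\varphi N_{,ij}-\varphi_{,i}N_{,j}-\varphi_{,j}N_{,i}+2\frac{\varphi}{N}\psi_{,i}\psi_{,j}=0;$$ for each $i$, $$\varphi\Big[(n-2)N\varphi_{,ii}-\varphi N_{,ii}-2\varphi_{,i}N_{,i}+2\frac{\varphi}{N}(\psi_{,i})^2\Big]+\varepsilon_i\sum_{k=1}^n\varepsilon_k\Big[\varphi\varphi_{,kk}N+\varphi\varphi_{,k}N_{,k}-(n-1)N(\varphi_{,k})^2-\frac{2}{(n-1)N}\varphi^2(\psi_{,k})^2\Big]=0;$$ $$\sum_{k=1}^n\varepsilon_k\big\{N\varphi\psi_{,kk}-(n-2)N\varphi_{,k}\psi_{,k}-\varphi\psi_{,k}N_{,k}\big\}=0;$$ $$\sum_{k=1}^n\varepsilon_k\big\{\varphi NN_{,kk}-(n-2)N\varphi_{,k}N_{,k}-\widehat C^2\varphi(\psi_{,k})^2\big\}=0,$$ where $\widehat C^2=\frac{2(n-2)}{n-1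}$.
   Context: Notation: $F_{,i}=\partial F/\partial x_i$, $F_{,ij}=\partial^2F/\partial x_i\partial x_j$. Definition (electrostatic system): Let $(M^n,h)$, $n\ge3$, be a semi-Riemannian manifold and $N:M\to\mathbb{R}_{>0}$, $\psi:M\to\mathbb{R}$ smooth. $(M,h,N,\psi)$ is an electrostatic system (static Einstein–Maxwell equations) if $\Delta N=\widehat C^2\frac{|\nabla\psi|^2}{N}$, $\operatorname{div}\big(\frac{\nabla\psi}{N}\big)=0$, and $N\operatorname{Ric}=\nabla^2N-2\frac{\nabla\psi\otimes\nabla\psi}{N}+\frac{2}{(n-1)N}|\nabla\psi|^2h$, where $\widehat C^2=\frac{2(n-2)}{n-1}$ and $\nabla,\Delta,\nabla^2,\operatorname{Ric},\operatorname{div}$ are taken with respect to $h$. *)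

(* Defs.v *)
From HB Require Import structures.
From mathcomp Require Import all_boot all_order all_algebra.
From mathcomp Require Import all_classical all_reals all_analysis.
Set Implicit Arguments. Unset Strict Implicit. Unset Printing Implicit Defensive.
Import Order.TTheory GRing.Theory Num.Theory.
Import numFieldNormedType.Exports.
Local Open Scope classical_set_scope.
Local Open Scope ring_scope.

Section Geometry.
Variables (R : realType) (n : nat).
Notation pt := 'rV[R]_n.

Definition coord_vec (i : 'I_n) : pt := delta_mx 0 i.
Definition pd (i : 'I_n) (f : pt -> R) : pt -> R :=
  fun x => derive f x (coord_vec i).
Definition iter_pd (l : seq 'I_n) (f : pt -> R) : pt -> R := foldr pd f l.

Definition smooth_on (Om : set pt) (f : pt -> R) : Prop :=
  forall (l : seq 'I_n) (x : pt), Om x -> differentiable (iter_pd l f) x.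

(* A (semi-Riemannian) metric on an open subset of R^n given in the
   global Cartesian chart by its component matrix G x = (g_ij(x)). *)
Variable G : pt -> 'M[R]_n.
Definition Ginv (x : pt) : 'M[R]_n := invmx (G x).

Definition christoffel (k i j : 'I_n) (x : pt) : R :=
  2^-1 * \sum_(l < n) Ginv x k l *
    (pd i (fun y => G y j l) x + pd j (fun y => G y i l) x
     - pd l (fun y => G y i j) x).

Definition ricci (i j : 'I_n) (x : pt) : R :=
  \sum_(k < n) (pd k (christoffel k i j) x - pd j (christoffel k i k) x
    + \sum_(l < n) (christoffel k k l x * christoffel l i j x
                    - christoffel k j l x * christoffel l i k x)).

Definition hessian (f : pt -> R) (i j : 'I_n) (x : pt) : R :=
  pd i (pd j f) x - \sum_(k < n) christoffel k i j x * pd k f x.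

Definition laplacian (f : pt -> R) (x : pt) : R :=
  \sum_(i < n) \sum_(j < n) Ginv x i j * hessian f i j x.

Definition grad_sq (f : pt -> R) (x : pt) : R :=
  \sum_(i < n) \sum_(j < n) Ginv x i j * pd i f x * pd j f x.

Definition grad (f : pt -> R) (k : 'I_n) (x : pt) : R :=
  \sum_(j < n) Ginv x k j * pd j f x.

Definition divergence (X : 'I_n -> pt -> R) (x : pt) : R :=
  \sum_(i < n) pd i (X i) x
  + \sum_(i < n) \sum_(k < n) christoffel i i k x * X k x.

End Geometry.

Definition Chat2 (R : realType) (n : nat) : R :=
  2 * (n%:R - 2) / (n%:R - 1).

Definition electrostatic (R : realType) (n : nat) (Om : set 'rV[R]_n)
  (G : 'rV[R]_n -> 'M[R]_n) (N psi : 'rV[R]_n -> R) : Prop :=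
  forall x, Om x ->
    [/\ laplacian G N x = Chat2 R n * grad_sq G psi x / N x,
        divergence G (fun k y => grad G psi k y / N y) x = 0 &
        forall i j : 'I_n,
          N x * ricci G i j x =
            hessian G N i j x - 2 * (pd i psi x * pd j psi x) / N x
            + 2 / ((n%:R - 1) * N x) * grad_sq G psi x * G x i j].

Definition conf_metric (R : realType) (n : nat) (eps : 'I_n -> R)
  (phi : 'rV[R]_n -> R) : 'rV[R]_n -> 'M[R]_n :=
  fun x => \matrix_(i, j) ((if i == j then eps i else 0) / phi x ^+ 2).

(* Main.v *)
Require Import Defs.
From HB Require Import structures.
From mathcomp Require Import all_boot all_order all_algebra.
From mathcomp Require Import all_classical all_reals all_analysis.
From mathcomp Require Import ring lra.
Import Order.TTheory GRing.Theory Num.Theory.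
Import numFieldNormedType.Exports.
Local Open Scope classical_set_scope.
Local Open Scope ring_scope.


Section C.
Variables (R : realType) (n : nat).
Notation V := 'rV[R]_n.

Lemma line_derive (f : V -> R) (u w : V) (s : R) : derivable f (s *: u + w) u ->
  is_derive s 1 (fun t : R => f (t *: u + w)) (derive f (s *: u + w) u).
Proof.
move=> df.
have E : (fun h : R => h^-1 *: (((fun t => f (t *: u + w)) \o shift s) (h *: 1) - f (s *: u + w))) = (fun h => h^-1 *: ((f \o shift (s *: u + w)) (h *: u) - f (s *: u + w))).
  apply/funext => h /=.
  by rewrite /shift scalerDl [h *: 1]mulr1 addrA.
apply: DeriveDef; [rewrite /derivable E // | rewrite /derive E //].
Qed.

Lemma clairaut_half (f : V -> R) (x u v : V) :
  (\forall y \near x, derivable f y u) -> differentiable (fun y => derive f y u) x ->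
  forall e : R, 0 < e -> exists2 r : R, 0 < r & forall h : R, 0 < h -> h < r ->
   `| f (x + h *: u + h *: v) - f (x + h *: u) - f (x + h *: v) + f x
      - h ^+ 2 * derive (fun y => derive f y u) x v| <= e * h ^+ 2.
Proof.
move=> Hd dF e e0.
set F := fun y => derive f y u.
set K := 2 * `|u| + 2 * `|v| + 1.
have K0 : 0 < K by rewrite /K; have := normr_ge0 u; have := normr_ge0 v; lra.
set e' := e / K.
have e'0 : 0 < e' by rewrite /e' divr_gt0.
have := diff_locally dF; move/eqaddoP => /(_ e' e'0).
move/nbhs_ballP => [r1 r1pos H1].
move/nbhs_ballP: Hd => [r2 r2pos H2].
exists (Num.min r1 r2 / K); first by rewrite divr_gt0 // lt_min r1pos r2pos.
move=> h h0 hr.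
have hK : h * K < Num.min r1 r2 by rewrite -ltr_pdivlMr.
have hK1 : h * K < r1 by apply: (lt_le_trans hK); rewrite ge_min lexx.
have hK2 : h * K < r2 by apply: (lt_le_trans hK); rewrite ge_min lexx orbT.
have nu := normr_ge0 u; have nv := normr_ge0 v.
have Pt : forall t s : R, 0 <= t <= h -> 0 <= s <= h -> `|t *: u + s *: v| <= h * (`|u| + `|v|).
  move=> t s /andP[t0 th] /andP[s0 sh].
  apply: (le_trans (ler_normD _ _)); rewrite !normrZ (ger0_norm t0) (ger0_norm s0).
  rewrite mulrDr; apply: lerD; apply: ler_wpM2r => //.
have Dt : forall t s : R, 0 <= t <= h -> 0 <= s <= h -> derivable f (t *: u + (x + s *: v)) u.
  move=> t s ht hs; apply: H2; rewrite -ball_normE /=.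
  rewrite opprD addrA (addrC x) opprD addrA addrK -opprD normrN.
  apply: le_lt_trans (Pt t s ht hs) _; apply: le_lt_trans hK2.
  by rewrite ler_pM2l // /K; lra.
set g := (fun t : R => f (t *: u + (x + h *: v))) - (fun t : R => f (t *: u + (x + 0 *: v))).
have gd : forall t, 0 <= t <= h -> is_derive t 1 g
    (F (t *: u + (x + h *: v)) - F (t *: u + (x + 0 *: v))).
  move=> t ht; apply: is_deriveB; apply: line_derive; apply: Dt => //.
    by rewrite lexx ltW.
  by rewrite lexx ltW.
have gc : {within `[0, h], continuous g}.
  apply: continuous_in_subspaceT => t tin.
  move: tin; rewrite inE /= => tin. idtac.
  have /gd [dg _] : 0 <= t <= h by move: tin; rewrite in_itv.
  exact/differentiable_continuous/derivable1_diffP.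
have gd' : forall t, t \in `]0, h[ -> is_derive t 1 g
    (F (t *: u + (x + h *: v)) - F (t *: u + (x + 0 *: v))).
  by move=> t; rewrite in_itv /= => /andP[a b]; apply: gd; rewrite !ltW.
have [c cin Hc] := MVT h0 gd' gc.
move: cin; rewrite in_itv /= => /andP[c0 ch].

have Ob : forall w : V, `|w| < r1 -> `|F (w + x) - (F x + 'd F x w)| <= e' * `|w|.
  move=> w hw; have := H1 w; rewrite -ball_normE /= sub0r normrN => /(_ hw) /=.
  done.
set w1 := c *: u + h *: v.
set w2 := c *: u + 0 *: v.
have hc : 0 <= c <= h by rewrite (ltW c0) (ltW ch).
have hh : 0 <= h <= h by rewrite (ltW h0) /=; exact: lexx.
have h00 : (0:R) <= 0 <= h by rewrite (ltW h0) andbT; exact: lexx.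
have nw1 : `|w1| <= h * (`|u| + `|v|) by apply: Pt.
have nw2 : `|w2| <= h * (`|u| + `|v|) by apply: Pt.
have lt1 : forall w : V, `|w| <= h * (`|u| + `|v|) -> `|w| < r1.
  move=> w hw; apply: (le_lt_trans hw); apply: le_lt_trans hK1.
  by rewrite ler_pM2l // /K; lra.
have O1 := Ob w1 (lt1 _ nw1).
have O2 := Ob w2 (lt1 _ nw2).
have Lw : 'd F x w1 - 'd F x w2 = h * 'd F x v.
  by rewrite -linearB /w1 /w2 scale0r addr0 (addrC (c *: u)) addrK linearZ.
have dv : derive F x v = 'd F x v := deriveE _ dF.
have ED : f (x + h *: u + h *: v) - f (x + h *: u) - f (x + h *: v) + f x = g h - g 0.
  have gE : forall t, g t = f (t *: u + (x + h *: v)) - f (t *: u + (x + 0 *: v)) by [].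
  rewrite !gE !scale0r !addr0 !add0r.
  have -> : h *: u + (x + h *: v) = x + h *: u + h *: v by rewrite addrA (addrC (h *: u)).
  rewrite (addrC (h *: u) x); ring.
have E1 : c *: u + (x + h *: v) = w1 + x by rewrite /w1 addrCA addrC.
have E2 : c *: u + (x + 0 *: v) = w2 + x by rewrite /w2 addrCA addrC.
rewrite ED Hc E1 E2 dv subr0.
set a1 := F (w1 + x); set a2 := F (w2 + x).
set L1 := 'd F x w1; set L2 := 'd F x w2; set Lv := 'd F x v.
have -> : (a1 - a2) * h - h ^+ 2 * Lv = ((a1 - (F x + L1)) - (a2 - (F x + L2))) * h.
  have -> : L1 = L2 + h * Lv by rewrite -Lw; ring.
  ring.
rewrite normrM (gtr0_norm h0).
apply: (le_trans (ler_wpM2r (ltW h0) (ler_normB _ _))).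
have : `|a1 - (F x + L1)| + `|a2 - (F x + L2)| <= e' * (2 * (h * (`|u| + `|v|)))
  by apply: (le_trans (lerD O1 O2)); rewrite -mulrDr; apply: ler_wpM2l; [exact: ltW|lra].
move=> B; apply: (le_trans (ler_wpM2r (ltW h0) B)).
rewrite /e' expr2.
have -> : e / K * (2 * (h * (`|u| + `|v|))) * h = e * (h * h) * ((2 * `|u| + 2 * `|v|) / K) by field; lra.
rewrite ler_piMr //; first by apply: mulr_ge0; [exact: ltW|apply: mulr_ge0; exact: ltW].
by rewrite ler_pdivrMr // mul1r /K; lra.
Qed.

Lemma fin_aux (X H : R) : 0 < X -> 0 < H -> H * X <= X / 4 * H + X / 4 * H -> False.
Proof.
move=> X0 H0 Hle.
have : H * X <= H * (X / 2) by move: Hle; rewrite mulrC; lra.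
rewrite ler_pM2l //; lra.
Qed.
Lemma half_aux (m r : R) : 0 < m -> m <= r -> m / 2 < r.
Proof. move=> *; lra. Qed.

Lemma eq_of_close (A B : R) :
  (forall e, 0 < e -> exists h, 0 < h /\ exists D,
     `|D - h ^+ 2 * A| <= e * h ^+ 2 /\ `|D - h ^+ 2 * B| <= e * h ^+ 2) -> A = B.
Proof.
move=> H; apply/eqP; apply/negPn/negP => AB.
have X0 : 0 < `|A - B| by rewrite normr_gt0 subr_eq0.
have e0 : 0 < `|A - B| / 4 by rewrite divr_gt0.
have [h [h0 [D [K1 K2]]]] := H _ e0.
have : `|h ^+ 2 * B - h ^+ 2 * A| <= `|A - B| / 4 * h ^+ 2 + `|A - B| / 4 * h ^+ 2.
  have -> : h ^+ 2 * B - h ^+ 2 * A = (D - h ^+ 2 * A) - (D - h ^+ 2 * B) by ring.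
  by apply: (le_trans (ler_normB _ _)); apply: lerD.
rewrite -mulrBr normrM (ger0_norm (sqr_ge0 h)) distrC.
apply: fin_aux => //; by rewrite exprn_gt0.
Qed.

Lemma clairaut (f : V -> R) (x u v : V) :
  (\forall y \near x, derivable f y u) -> (\forall y \near x, derivable f y v) ->
  differentiable (fun y => derive f y u) x -> differentiable (fun y => derive f y v) x ->
  derive (fun y => derive f y u) x v = derive (fun y => derive f y v) x u.
Proof.
move=> Hu Hv du dv; apply: eq_of_close => e e0.
have [r1 r10 H1] := @clairaut_half f x u v Hu du e e0.
have [r2 r20 H2] := @clairaut_half f x v u Hv dv e e0.
have mp : 0 < Num.min r1 r2 by rewrite lt_min r10 r20.
exists (Num.min r1 r2 / 2); split; first by rewrite divr_gt0.
exists (f (x + (Num.min r1 r2 / 2) *: u + (Num.min r1 r2 / 2) *: v)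
   - f (x + (Num.min r1 r2 / 2) *: u) - f (x + (Num.min r1 r2 / 2) *: v) + f x).
split; first by apply: H1; [rewrite divr_gt0|apply: half_aux => //; rewrite ge_min lexx].
have m2 : Num.min r1 r2 <= r2 by rewrite ge_min lexx orbT.
move: (Num.min r1 r2 / 2) (half_aux _ _ mp m2) (divr_gt0 mp (ltr0Sn _ 1%N)) => h hr2 h0.
have := H2 h h0 hr2.
rewrite (addrAC x (h *: v)).
have -> : forall a b c d : R, a - b - c + d = a - c - b + d by move=> *; ring.
done.
Qed.
End C.
Section Alg.
Variables (R : realType) (n : nat) (eps : 'I_n -> R).
Hypothesis heps : forall i, eps i = 1 \/ eps i = -1.

Definition dlt (i j : 'I_n) : R := (i == j)%:R.
Lemma dl_refl i : dlt i i = 1. Proof. by rewrite /dlt eqxx. Qed.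
Lemma dl_neq i j : i != j -> dlt i j = 0 /\ dlt j i = 0.
Proof. by move=> h; rewrite /dlt (negbTE h) eq_sym (negbTE h). Qed.
Lemma dlC i j : dlt i j = dlt j i. Proof. by rewrite /dlt eq_sym. Qed.
Lemma ee i : eps i * eps i = 1. Proof. by case: (heps i) => ->; ring. Qed.

Lemma sum_gen (m : 'I_n) (F : 'I_n -> R) :
  (forall k, k != m -> F k = 0) -> \sum_(k < n) F k = F m.
Proof. by move=> h; rewrite (bigD1 m) //= big1 ?addr0 // => k /h. Qed.
Lemma sum_dl_l m (F : 'I_n -> R) : \sum_(k < n) dlt k m * F k = F m.
Proof. by rewrite (sum_gen m) ?dl_refl ?mul1r // => k /dl_neq [-> _]; rewrite mul0r. Qed.
Lemma sum_dl_r m (F : 'I_n -> R) : \sum_(k < n) dlt m k * F k = F m.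
Proof. by rewrite (sum_gen m) ?dl_refl ?mul1r // => k /dl_neq [_ ->]; rewrite mul0r. Qed.
Lemma sum_cst (c : R) : \sum_(k < n) c = n%:R * c.
Proof. by rewrite sumr_const card_ord mulr_natl. Qed.

Definition cfun (a : 'I_n -> R) (k i j : 'I_n) : R :=
  -(dlt k i * a j + dlt k j * a i - dlt i j * eps i * eps k * a k).

Arguments cfun : simpl never.

Lemma C0 a i j (X : 'I_n -> R) : \sum_(k < n) cfun a k i j * X k =
  -(X i * a j + X j * a i - dlt i j * eps i * \sum_(k < n) eps k * a k * X k).
Proof.
have E : forall k, cfun a k i j * X k = - (dlt k i * (a j * X k)) - dlt k j * (a i * X k)
   + dlt i j * eps i * (eps k * a k * X k) by move=> k; rewrite /cfun; ring.
rewrite (eq_bigr _ (fun k _ => E k)) !big_split /= !sumrN -!mulr_sumr !sum_dl_l; ring.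
Qed.

Lemma C1 a k j (Y : 'I_n -> R) : \sum_(l < n) Y l * cfun a k j l =
  -(dlt k j * \sum_(l < n) Y l * a l + Y k * a j - eps j * eps k * a k * Y j).
Proof.
have E : forall l, Y l * cfun a k j l = - (dlt k j * (Y l * a l)) - dlt k l * (Y l * a j)
   + dlt j l * (eps j * eps k * a k * Y l) by move=> l; rewrite /cfun; ring.
rewrite (eq_bigr _ (fun l _ => E l)) !big_split /= !sumrN -!mulr_sumr !sum_dl_r; ring.
Qed.

Lemma C3a a k l : cfun a k k l = - a l.
Proof. by rewrite /cfun dl_refl; case: (heps k) => ->; ring. Qed.

Lemma C3b a j : \sum_(k < n) cfun a k j k = - (n%:R * a j).
Proof.
have E : forall k, cfun a k j k = - (dlt k j * a k) - a j + dlt j k * (eps j * eps k * a k)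
  by move=> k; rewrite /cfun dl_refl; ring.
rewrite (eq_bigr _ (fun k _ => E k)) !big_split /= !sumrN sum_dl_l sum_dl_r sum_cst.
by case: (heps j) => ->; ring.
Qed.

Lemma T1 (D : 'I_n -> 'I_n -> R) i j : \sum_(k < n) cfun (D k) k i j =
  -(D i j + D j i - dlt i j * eps i * \sum_(k < n) eps k * D k k).
Proof.
have E : forall k, cfun (D k) k i j = - (dlt k i * D k j) - dlt k j * D k i
   + dlt i j * eps i * (eps k * D k k) by move=> k; rewrite /cfun; ring.
rewrite (eq_bigr _ (fun k _ => E k)) !big_split /= !sumrN -!mulr_sumr.
rewrite (sum_dl_l i (fun k => D k j)) (sum_dl_l j (fun k => D k i)); ring.
Qed.

Lemma ricci_abs a (D : 'I_n -> 'I_n -> R) i j :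
 \sum_(k < n) (cfun (D k) k i j - cfun (D j) k i k
   + \sum_(l < n) (cfun a k k l * cfun a l i j - cfun a k j l * cfun a l i k))
 = - D i j + (n%:R - 1) * D j i + dlt i j * eps i * \sum_(k < n) eps k * D k k
   + (n%:R - 2) * a i * a j
   - (n%:R - 2) * dlt i j * eps i * \sum_(k < n) eps k * a k ^+ 2.
Proof.
rewrite !big_split /= T1 sumrN C3b.
under eq_bigr => k _ do rewrite sumrB.
rewrite big_split /= sumrN.
have Q0 : \sum_(k < n) \sum_(l < n) cfun a k k l * cfun a l i j
   = \sum_(k < n) \sum_(l < n) - a l * cfun a l i j.
  by apply: eq_bigr => k _; apply: eq_bigr => l _; rewrite C3a.
rewrite Q0.
set S := \sum_(k < n) eps k * a k ^+ 2.
have Q1 : \sum_(l < n) - a l * cfun a l i j = a i * a j + a j * a i - dlt i j * eps i * S.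
  under eq_bigr => l _ do rewrite mulrC mulrN.
  rewrite sumrN C0 opprK /S; congr (_ - _); congr (_ * _); apply: eq_bigr => k _; ring.
rewrite Q1 sum_cst.
have Q2 : forall k, \sum_(l < n) cfun a k j l * cfun a l i k =
   - (cfun a k j i * a k) - a i * cfun a k j k - eps i * S * (dlt i k * dlt k j).
  move=> k; under eq_bigr => l _ do rewrite mulrC.
  rewrite C0 C1.
  have -> : \sum_(l < n) eps l * a l * a l = S by apply: eq_bigr => l _; ring.
  by case: (heps j) => ->; ring.
rewrite (eq_bigr _ (fun k _ => Q2 k)).
rewrite !big_split /= !sumrN -!mulr_sumr.
under eq_bigr => k _ do rewrite mulrC.
rewrite C0 C3b (sum_dl_r i (fun k => dlt k j)).
have -> : \sum_(k < n) eps k * a k * a k = S by apply: eq_bigr => l _; ring.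
case: (eqVneq i j) => [<-|/dl_neq [h1 h2]]; rewrite ?dl_refl ?h1 ?h2; ring.
Qed.
End Alg.
Arguments dlt {R n}.
Arguments dl_refl {R n}.
Arguments dl_neq {R n i j}.
Arguments dlC {R n}.
Arguments sum_gen {R n}.
Arguments sum_dl_l {R n}.
Arguments sum_dl_r {R n}.
Arguments sum_cst {R n}.
Arguments ee {R n eps}.
Arguments cfun {R n}.
Arguments C0 {R n eps}.
Arguments C1 {R n eps}.
Arguments C3a {R n eps}.
Arguments C3b {R n eps}.
Arguments T1 {R n eps}.
Arguments ricci_abs {R n eps}.
Section Deriv.
Variables (R : realType) (n : nat).
Notation V := 'rV[R]_n.
Implicit Types (f g : V -> R) (y v : V).

Lemma dMc (c : R) f y v : derivable f y v -> derive (fun z => c * f z) y v = c * derive f y v.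
Proof. by move=> df; have := deriveMl c df. Qed.
Lemma dMf f g y v : derivable f y v -> derivable g y v ->
  derive (fun z => f z * g z) y v = f y * derive g y v + g y * derive f y v.
Proof. by move=> df dg; have := deriveM df dg. Qed.
Lemma dVf f y v : f y != 0 -> derivable f y v ->
  derive (fun z => (f z)^-1) y v = - (f y) ^-2 * derive f y v.
Proof. by move=> f0 df; have := deriveV f0 df. Qed.
Lemma dDf f g y v : derivable f y v -> derivable g y v ->
  derive (fun z => f z + g z) y v = derive f y v + derive g y v.
Proof. by move=> df dg; have := deriveD df dg. Qed.
Lemma dBf f g y v : derivable f y v -> derivable g y v ->
  derive (fun z => f z - g z) y v = derive f y v - derive g y v.
Proof. by move=> df dg; have := deriveB df dg. Qed.
Lemma dNf f y v : derivable f y v -> derive (fun z => - f z) y v = - derive f y v.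
Proof. by move=> df; have := deriveN df. Qed.
Lemma bMc (c : R) f y v : derivable f y v -> derivable (fun z => c * f z) y v.
Proof. by move=> df; have := derivableM (derivable_cst c y v) df. Qed.
Lemma bMf f g y v : derivable f y v -> derivable g y v -> derivable (fun z => f z * g z) y v.
Proof. by move=> df dg; have := derivableM df dg. Qed.
Lemma bVf f y v : f y != 0 -> derivable f y v -> derivable (fun z => (f z)^-1) y v.
Proof. by move=> f0 df; have := derivableV f0 df. Qed.
Lemma bDf f g y v : derivable f y v -> derivable g y v -> derivable (fun z => f z + g z) y v.
Proof. by move=> df dg; have := derivableD df dg. Qed.
Lemma bBf f g y v : derivable f y v -> derivable g y v -> derivable (fun z => f z - g z) y v.
Proof. by move=> df dg; have := derivableB df dg. Qed.
Lemma bNf f y v : derivable f y v -> derivable (fun z => - f z) y v.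
Proof. by move=> df; have := derivableN df. Qed.
End Deriv.
Section Main.
Variables (R : realType) (n : nat) (eps : 'I_n -> R).
Hypothesis heps : forall i, eps i = 1 \/ eps i = -1.
Variables (Om : set 'rV[R]_n) (phi N psi : 'rV[R]_n -> R).
Hypothesis hOm : open Om.
Hypotheses (sphi : smooth_on Om phi) (sN : smooth_on Om N) (spsi : smooth_on Om psi).
Hypothesis phi_pos : forall x, Om x -> 0 < phi x.
Hypothesis N_pos : forall x, Om x -> 0 < N x.
Local Notation V := 'rV[R]_n.
Local Notation G := (conf_metric eps phi).
Local Notation dl := (@dlt R n).
Local Notation cf := (@cfun R n eps).

Lemma dlneq (i j : 'I_n) : i != j -> dl i j = 0 /\ dl j i = 0.
Proof. exact: dl_neq. Qed.

Lemma nearOm x : Om x -> \forall y \near x, Om y.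
Proof. by move=> Hx; apply: open_nbhs_nbhs; split. Qed.

Lemma phi0 {y} : Om y -> phi y != 0.
Proof. by move=> /phi_pos h; rewrite gt_eqF. Qed.
Lemma N0 {y} : Om y -> N y != 0.
Proof. by move=> /N_pos h; rewrite gt_eqF. Qed.

Lemma sdiff0 f y : smooth_on Om f -> Om y -> differentiable f y.
Proof. by move=> sf Hy; exact: (sf [::] y Hy). Qed.
Lemma sdiff1 f m y : smooth_on Om f -> Om y -> differentiable (pd m f) y.
Proof. by move=> sf Hy; exact: (sf [:: m] y Hy). Qed.
Lemma sd0 f y v : smooth_on Om f -> Om y -> derivable f y v.
Proof. by move=> sf Hy; apply: diff_derivable; exact: sdiff0. Qed.
Lemma sd1 f m y v : smooth_on Om f -> Om y -> derivable (pd m f) y v.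
Proof. by move=> sf Hy; apply: diff_derivable; exact: sdiff1. Qed.

Lemma sym_pd f i j x : smooth_on Om f -> Om x -> pd i (pd j f) x = pd j (pd i f) x.
Proof.
move=> sf Hx; rewrite /pd; apply: clairaut.
- by apply: (filterS (P := Om)); [move=> y Hy; exact: sd0|exact: nearOm].
- by apply: (filterS (P := Om)); [move=> y Hy; exact: sd0|exact: nearOm].
- exact: (sdiff1 _ j _ sf Hx).
- exact: (sdiff1 _ i _ sf Hx).
Qed.

Lemma G_val y i j : G y i j = dl i j * eps i / phi y ^+ 2.
Proof. by rewrite /conf_metric mxE /dlt; case: (i == j) => /=; ring. Qed.

Lemma Ginv_val {y} : phi y != 0 ->
  Ginv G y = \matrix_(i, j) (dl i j * eps i * phi y ^+ 2).
Proof.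
move=> p0.
set B := \matrix_(i, j) (dl i j * eps i * phi y ^+ 2).
have AB : G y *m B = 1%:M.
  apply/matrixP => i j; rewrite !mxE.
  rewrite (eq_bigr (fun k => dl i k * (eps i / phi y ^+ 2 * (dl k j * eps k * phi y ^+ 2)))).
    rewrite sum_dl_r /dlt; case: (i == j) => /=; last by ring.
    by case: (heps i) => ->; field; rewrite ?expf_neq0.
  by move=> k _; rewrite G_val !mxE; ring.
have [uA _] := mulmx1_unit AB.
by rewrite /Ginv -[RHS]mul1mx -(mulVmx uA) -mulmxA AB mulmx1.
Qed.
Lemma dG_val y k i j : Om y ->
  pd k (fun z => G z i j) y = dl i j * eps i * (- 2 * pd k phi y / phi y ^+ 3).
Proof.
move=> Hy; rewrite /pd.
have -> : (fun z => G z i j) = (fun z => dl i j * eps i * (phi z * phi z)^-1).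
  by apply/funext => z; rewrite G_val expr2.
have p0 := phi0 Hy.
have dp := fun v => sd0 _ y v sphi Hy.
rewrite dMc; last by apply: bVf; [rewrite mulf_neq0|apply: bMf].
rewrite dVf; [|by rewrite mulf_neq0|by apply: bMf].
rewrite dMf //.
by field.
Qed.

Definition Af (m : 'I_n) (y : V) := pd m phi y / phi y.

Lemma chr_val y k i j : Om y -> christoffel G k i j y = cf (fun m => Af m y) k i j.
Proof.
move=> Hy; have p0 := phi0 Hy.
rewrite /christoffel (Ginv_val p0).
set X := fun m => - 2 * pd m phi y / phi y ^+ 3.
rewrite (eq_bigr (fun l => dl k l * (eps k * phi y ^+ 2 * (dl j l * eps j * X i
   + dl i l * eps i * X j - dl i j * eps i * X l)))); last first.
  by move=> l _; rewrite mxE !dG_val // /X; ring.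
rewrite (sum_dl_r k (fun l => eps k * phi y ^+ 2 * (dl j l * eps j * X i + dl i l * eps i * X j - dl i j * eps i * X l))).
rewrite /cfun /Af /X.
set ai := pd i phi y / phi y; set aj := pd j phi y / phi y; set ak := pd k phi y / phi y.
have -> : 2^-1 * (eps k * phi y ^+ 2 * (dl j k * eps j * (-2 * pd i phi y / phi y ^+ 3) +
   dl i k * eps i * (-2 * pd j phi y / phi y ^+ 3) - dl i j * eps i * (-2 * pd k phi y / phi y ^+ 3)))
   = - (eps k * (dl j k * eps j * ai + dl i k * eps i * aj - dl i j * eps i * ak)).
  by rewrite /ai /aj /ak; field.
case: (eqVneq j k) => [->|/dlneq [h1 h2]]; case: (eqVneq i k) => [->|/dlneq [h3 h4]];
  by rewrite ?dl_refl ?h1 ?h2 ?h3 ?h4; case: (heps k) => ->; ring.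
Qed.

Lemma bA m y v : Om y -> derivable (Af m) y v.
Proof. by move=> Hy; apply: bMf; [exact: (sd1 _ _ _ _ sphi Hy)|apply: bVf; [exact: phi0|exact: (sd0 _ _ _ sphi Hy)]]. Qed.

Definition DD (m c : 'I_n) (x : V) :=
  pd m (pd c phi) x / phi x - pd c phi x * pd m phi x / phi x ^+ 2.

Lemma dA m c x : Om x -> pd m (Af c) x = DD m c x.
Proof.
move=> Hx; rewrite /Af /DD /pd; have p0 := phi0 Hx.
rewrite dMf; [|exact: (sd1 _ _ _ _ sphi Hx)|apply: bVf; [exact: p0|exact: (sd0 _ _ _ sphi Hx)]].
rewrite dVf //; last exact: (sd0 _ _ _ sphi Hx).
by field.
Qed.

Lemma dchr x m k i j : Om x ->
  pd m (christoffel G k i j) x = cf (fun c => DD m c x) k i j.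
Proof.
move=> Hx; rewrite /pd.
have E : \forall y \near x, christoffel G k i j y =
   - (dl k i * Af j y + dl k j * Af i y - dl i j * eps i * eps k * Af k y).
  by apply: (filterS (P := Om)); [move=> y Hy; rewrite chr_val|exact: nearOm].
rewrite (near_eq_derive _ E).
have b := fun c => bA c x (coord_vec R m) Hx.
rewrite dNf; last by apply: bBf; [apply: bDf; apply: bMc|apply: bMc].
rewrite dBf; [|by apply: bDf; apply: bMc|by apply: bMc].
rewrite dDf; [|by apply: bMc|by apply: bMc].
rewrite !dMc //.
by rewrite /cfun -!dA.
Qed.
Section Atoms.
Variable x : V.
Definition SP := \sum_(k < n) eps k * pd k (pd k phi) x.
Definition Sphi2 := \sum_(k < n) eps k * pd k phi x ^+ 2.
Definition SphiN := \sum_(k < n) eps k * (pd k phi x * pd k N x).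
Definition Spsi2 := \sum_(k < n) eps k * pd k psi x ^+ 2.
Definition SNN := \sum_(k < n) eps k * pd k (pd k N) x.
Definition SphiPsi := \sum_(k < n) eps k * (pd k phi x * pd k psi x).
Definition SpsiN := \sum_(k < n) eps k * (pd k psi x * pd k N x).
Definition SPsi := \sum_(k < n) eps k * pd k (pd k psi) x.
End Atoms.

Lemma ricci_val x i j : Om x -> ricci G i j x =
  (n%:R - 2) * pd i (pd j phi) x / phi x
  + dl i j * eps i * (SP x / phi x - (n%:R - 1) * Sphi2 x / phi x ^+ 2).
Proof.
move=> Hx; have p0 := phi0 Hx.
have E : ricci G i j x = \sum_(k < n) (cf (fun c => DD k c x) k i j - cf (fun c => DD j c x) k i k
   + \sum_(l < n) (cf (fun m => Af m x) k k l * cf (fun m => Af m x) l i j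
                 - cf (fun m => Af m x) k j l * cf (fun m => Af m x) l i k)).
  rewrite /ricci; apply: eq_bigr => k _; rewrite !dchr //; congr (_ + _).
  by apply: eq_bigr => l _; rewrite !chr_val.
rewrite E (ricci_abs heps (fun m => Af m x) (fun m c => DD m c x)) /=.
have h1 : \sum_(k < n) eps k * DD k k x = SP x / phi x - Sphi2 x / phi x ^+ 2.
  rewrite (eq_bigr (fun k => (eps k * pd k (pd k phi) x) / phi x - (eps k * pd k phi x ^+ 2) / phi x ^+ 2)); last first.
    by move=> k _; rewrite /DD; field.
  by rewrite sumrB -!mulr_suml.
have h2 : \sum_(k < n) eps k * Af k x ^+ 2 = Sphi2 x / phi x ^+ 2.
  by rewrite /Sphi2 mulr_suml; apply: eq_bigr => k _; rewrite /Af; field.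
rewrite h1 h2 /DD /Af (sym_pd phi j i x sphi Hx).
by field.
Qed.

Lemma hess_val x i j : Om x -> hessian G N i j x =
  pd i (pd j N) x + pd i N x * Af j x + pd j N x * Af i x
  - dl i j * eps i * (SphiN x / phi x).
Proof.
move=> Hx; have p0 := phi0 Hx.
rewrite /hessian.
rewrite (eq_bigr (fun k => cf (fun m => Af m x) k i j * pd k N x)); last first.
  by move=> k _; rewrite chr_val.
rewrite C0.
have -> : \sum_(k < n) eps k * Af k x * pd k N x = SphiN x / phi x.
  by rewrite /SphiN mulr_suml; apply: eq_bigr => k _; rewrite /Af; field.
ring.
Qed.
Lemma lap_val x : Om x -> laplacian G N x = phi x ^+ 2 * SNN x - (n%:R - 2) * phi x * SphiN x.
Proof.
move=> Hx; have p0 : phi x != 0 by apply: phi0.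
rewrite /laplacian (Ginv_val p0).
rewrite (eq_bigr (fun i => eps i * phi x ^+ 2 * hessian G N i i x)); last first.
  move=> i _; rewrite (eq_bigr (fun j => dl i j * (eps i * phi x ^+ 2 * hessian G N i j x))).
    by rewrite sum_dl_r.
  by move=> j _; rewrite mxE; ring.
rewrite (eq_bigr (fun i => phi x ^+ 2 * (eps i * pd i (pd i N) x)
   + 2 * phi x * (eps i * (pd i phi x * pd i N x)) - phi x * SphiN x)); last first.
  by move=> i _; rewrite hess_val // dl_refl /Af; case: (heps i) => ->; field.
rewrite sumrB big_split /= -!mulr_sumr sum_cst.
rewrite /SNN /SphiN; ring.
Qed.

Lemma gs_val x : Om x -> grad_sq G psi x = phi x ^+ 2 * Spsi2 x.
Proof.
move=> Hx; have p0 : phi x != 0 by apply: phi0.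
rewrite /grad_sq (Ginv_val p0).
rewrite (eq_bigr (fun i => phi x ^+ 2 * (eps i * pd i psi x ^+ 2))); last first.
  move=> i _; rewrite (eq_bigr (fun j => dl i j * (eps i * phi x ^+ 2 * pd i psi x * pd j psi x))).
    by rewrite sum_dl_r; ring.
  by move=> j _; rewrite mxE; ring.
by rewrite -mulr_sumr.
Qed.

Lemma grad_val y k : Om y -> grad G psi k y = eps k * (phi y * phi y) * pd k psi y.
Proof.
move=> Hy; have p0 : phi y != 0 by apply: phi0.
rewrite /grad (Ginv_val p0).
rewrite (eq_bigr (fun j => dl k j * (eps k * (phi y * phi y) * pd j psi y))).
  by rewrite sum_dl_r.
by move=> j _; rewrite mxE; ring.
Qed.
Lemma dX x i : Om x -> pd i (fun y => grad G psi i y / N y) x =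
  eps i * (2 * phi x * pd i phi x * pd i psi x / N x
     + phi x ^+ 2 * pd i (pd i psi) x / N x
     - phi x ^+ 2 * pd i psi x * pd i N x / N x ^+ 2).
Proof.
move=> Hx; have p0 : phi x != 0 by apply: phi0.
have q0 : N x != 0 by apply: N0.
rewrite /pd.
have E : \forall y \near x, grad G psi i y / N y =
   eps i * (phi y * (phi y * (pd i psi y * (N y)^-1))).
  apply: (filterS (P := Om)); last exact: nearOm.
  by move=> y Hy; rewrite grad_val //; ring.
rewrite (near_eq_derive _ E).
have dp := fun v => sd0 phi x v sphi Hx.
have dN := fun v => sd0 N x v sN Hx.
have dps := fun v => sd1 psi i x v spsi Hx.
have dNV := fun v => @bVf R n N x v q0 (dN v).
rewrite dMc; last by apply: bMf => //; apply: bMf => //; apply: bMf.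
rewrite dMf //; last by apply: bMf => //; apply: bMf.
rewrite dMf //; last by apply: bMf.
rewrite dMf //.
rewrite dVf //.
by rewrite /pd; field.
Qed.

Lemma div_val x : Om x -> divergence G (fun k y => grad G psi k y / N y) x =
   phi x / N x ^+ 2 * (N x * phi x * SPsi x - (n%:R - 2) * N x * SphiPsi x - phi x * SpsiN x).
Proof.
move=> Hx; have p0 : phi x != 0 by apply: phi0.
have q0 : N x != 0 by apply: N0.
rewrite /divergence.
rewrite (eq_bigr (fun i => 2 * phi x / N x * (eps i * (pd i phi x * pd i psi x))
   + phi x ^+ 2 / N x * (eps i * pd i (pd i psi) x)
   - phi x ^+ 2 / N x ^+ 2 * (eps i * (pd i psi x * pd i N x)))); last first.
  by move=> i _; rewrite dX //; field; rewrite ?p0 ?q0 //.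
have E2 : \sum_(i < n) \sum_(k < n) christoffel G i i k x * (grad G psi k x / N x)
    = \sum_(i < n) (- (phi x / N x) * SphiPsi x).
  apply: eq_bigr => i _; rewrite /SphiPsi mulr_sumr; apply: eq_bigr => k _.
  by rewrite chr_val // (C3a heps) grad_val // /Af; field; rewrite ?p0 ?q0 //.
rewrite E2.
rewrite sumrB big_split /= -!mulr_sumr sum_cst.
rewrite /SPsi /SphiPsi /SpsiN; field; rewrite ?p0 ?q0 //.
Qed.
Lemma fac_eq (a b c d : R) : c != 0 -> a - b = c * d -> (a = b <-> d = 0).
Proof.
move=> c0 E; split => [ab|d0].
  have : c * d = 0 by rewrite -E ab subrr.
  by move/eqP; rewrite mulf_eq0 (negbTE c0) => /eqP.
by apply/eqP; rewrite -subr_eq0 E d0 mulr0.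
Qed.

Lemma Elap x : Om x -> laplacian G N x - Chat2 R n * grad_sq G psi x / N x =
  (phi x / N x) * \sum_(k < n) eps k *
           (phi x * N x * pd k (pd k N) x
            - (n%:R - 2) * N x * pd k phi x * pd k N x
            - Chat2 R n * phi x * (pd k psi x) ^+ 2).
Proof.
move=> Hx; have p0 : phi x != 0 by apply: phi0.
have q0 : N x != 0 by apply: N0.
rewrite lap_val // gs_val //.
rewrite (eq_bigr (fun k => phi x * N x * (eps k * pd k (pd k N) x)
   - (n%:R - 2) * N x * (eps k * (pd k phi x * pd k N x))
   - Chat2 R n * phi x * (eps k * pd k psi x ^+ 2))); last by move=> k _; ring.
rewrite !sumrB -!mulr_sumr.
rewrite -/(SNN _) -/(SphiN _) -/(Spsi2 _).
field; rewrite ?p0 ?q0 //.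
Qed.

Lemma Ediv x : Om x -> divergence G (fun k y => grad G psi k y / N y) x - 0 =
  (phi x / N x ^+ 2) * \sum_(k < n) eps k *
           (N x * phi x * pd k (pd k psi) x
            - (n%:R - 2) * N x * pd k phi x * pd k psi x
            - phi x * pd k psi x * pd k N x).
Proof.
move=> Hx; have p0 : phi x != 0 by apply: phi0.
have q0 : N x != 0 by apply: N0.
rewrite subr0 div_val //; congr (_ * _).
rewrite (eq_bigr (fun k => N x * phi x * (eps k * pd k (pd k psi) x)
   - (n%:R - 2) * N x * (eps k * (pd k phi x * pd k psi x))
   - phi x * (eps k * (pd k psi x * pd k N x)))); last by move=> k _; ring.
by rewrite !sumrB -!mulr_sumr.
Qed.

Lemma Eoff x i j : Om x -> i != j ->
  N x * ricci G i j x -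
   (hessian G N i j x - 2 * (pd i psi x * pd j psi x) / N x
    + 2 / ((n%:R - 1) * N x) * grad_sq G psi x * G x i j) =
  (phi x)^-1 * ((n%:R - 2) * N x * pd i (pd j phi) x - phi x * pd i (pd j N) x
          - pd i phi x * pd j N x - pd j phi x * pd i N x
          + 2 * (phi x / N x) * pd i psi x * pd j psi x).
Proof.
move=> Hx ij; have p0 : phi x != 0 by apply: phi0.
have q0 : N x != 0 by apply: N0.
have [d1 _] := dlneq _ _ ij.
rewrite ricci_val // hess_val // gs_val // G_val d1 /Af.
move: (2 / ((n%:R - 1) * N x)) => c.
move: (pd i (pd j phi) x) (pd i (pd j N) x) (pd i phi x) (pd j phi x) => A B C D.
move: (pd i N x) (pd j N x) (pd i psi x) (pd j psi x) => E F H K.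
move: (SP x) (Sphi2 x) (SphiN x) (Spsi2 x) => s1 s2 s3 s4.
move: (n%:R : R) (eps i) => m e.
move: (phi x) (N x) p0 q0 => f g p0 q0.
field; rewrite ?p0 ?q0 //.
Qed.

Lemma Ediag x i : Om x ->
  N x * ricci G i i x -
   (hessian G N i i x - 2 * (pd i psi x * pd i psi x) / N x
    + 2 / ((n%:R - 1) * N x) * grad_sq G psi x * G x i i) =
  (phi x ^+ 2)^-1 * (phi x * ((n%:R - 2) * N x * pd i (pd i phi) x
                   - phi x * pd i (pd i N) x
                   - 2 * pd i phi x * pd i N x
                   + 2 * (phi x / N x) * (pd i psi x) ^+ 2)
          + eps i * \sum_(k < n) eps k *
              (phi x * pd k (pd k phi) x * N x
               + phi x * pd k phi x * pd k N x
               - (n%:R - 1) * N x * (pd k phi x) ^+ 2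
               - 2 / ((n%:R - 1) * N x) * phi x ^+ 2 * (pd k psi x) ^+ 2)).
Proof.
move=> Hx; have p0 : phi x != 0 by apply: phi0.
have q0 : N x != 0 by apply: N0.
rewrite (eq_bigr (fun k => phi x * N x * (eps k * pd k (pd k phi) x)
   + phi x * (eps k * (pd k phi x * pd k N x))
   - (n%:R - 1) * N x * (eps k * pd k phi x ^+ 2)
   - 2 / ((n%:R - 1) * N x) * phi x ^+ 2 * (eps k * pd k psi x ^+ 2))); last by move=> k _; ring.
rewrite !sumrB big_split /= -!mulr_sumr.
rewrite -/(SP _) -/(SphiN _) -/(Sphi2 _) -/(Spsi2 _).
rewrite ricci_val // hess_val // gs_val // G_val dl_refl /Af.
move: (2 / ((n%:R - 1) * N x)) => c.
move: (pd i (pd i phi) x) (pd i (pd i N) x) (pd i phi x) (pd i N x) (pd i psi x) => A B C E H.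
move: (SP x) (Sphi2 x) (SphiN x) (Spsi2 x) => s1 s2 s3 s4.
move: (n%:R : R) (eps i) => m e.
move: (phi x) (N x) p0 q0 => f g p0 q0.
field; rewrite ?p0 ?q0 //.
Qed.
Lemma main_equiv :
  electrostatic Om (conf_metric eps phi) N psi <->
  (forall x, Om x ->
    [/\ (forall i j : 'I_n, i != j ->
          (n%:R - 2) * N x * pd i (pd j phi) x - phi x * pd i (pd j N) x
          - pd i phi x * pd j N x - pd j phi x * pd i N x
          + 2 * (phi x / N x) * pd i psi x * pd j psi x = 0),
        (forall i : 'I_n,
          phi x * ((n%:R - 2) * N x * pd i (pd i phi) x
                   - phi x * pd i (pd i N) x
                   - 2 * pd i phi x * pd i N x
                   + 2 * (phi x / N x) * (pd i psi x) ^+ 2)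
          + eps i * \sum_(k < n) eps k *
              (phi x * pd k (pd k phi) x * N x
               + phi x * pd k phi x * pd k N x
               - (n%:R - 1) * N x * (pd k phi x) ^+ 2
               - 2 / ((n%:R - 1) * N x) * phi x ^+ 2 * (pd k psi x) ^+ 2)
          = 0),
        \sum_(k < n) eps k *
           (N x * phi x * pd k (pd k psi) x
            - (n%:R - 2) * N x * pd k phi x * pd k psi x
            - phi x * pd k psi x * pd k N x) = 0 &
        \sum_(k < n) eps k *
           (phi x * N x * pd k (pd k N) x
            - (n%:R - 2) * N x * pd k phi x * pd k N x
            - Chat2 R n * phi x * (pd k psi x) ^+ 2) = 0]).
Proof.
have nz : forall x, Om x -> [/\ (phi x)^-1 != 0, (phi x ^+ 2)^-1 != 0,
    phi x / N x != 0 & phi x / N x ^+ 2 != 0].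
  move=> x Hx; have p0 : phi x != 0 by apply: phi0.
  have q0 : N x != 0 by apply: N0.
  by rewrite !invr_eq0 expf_neq0 // !mulf_neq0 // invr_eq0 ?expf_neq0.
split.
- move=> H x Hx; have [h1 h2 h3] := H x Hx; have [z1 z2 z3 z4] := nz x Hx.
  split.
  + by move=> i j ij; apply: (@fac_eq _ _ _ _ z1 (Eoff _ _ _ Hx ij)).1; apply: h3.
  + by move=> i; apply: (@fac_eq _ _ _ _ z2 (Ediag _ i Hx)).1; apply: h3.
  + by apply: (@fac_eq _ _ _ _ z4 (Ediv _ Hx)).1.
  + by apply: (@fac_eq _ _ _ _ z3 (Elap _ Hx)).1.
- move=> H x Hx; have [h1 h2 h3 h4] := H x Hx; have [z1 z2 z3 z4] := nz x Hx.
  split.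
  + by apply: (@fac_eq _ _ _ _ z3 (Elap _ Hx)).2.
  + by apply: (@fac_eq _ _ _ _ z4 (Ediv _ Hx)).2.
  + move=> i j; case: (eqVneq i j) => [<-|ij].
      by apply: (@fac_eq _ _ _ _ z2 (Ediag _ i Hx)).2.
    by apply: (@fac_eq _ _ _ _ z1 (Eoff _ _ _ Hx ij)).2; apply: h1.
Qed.
End Main.

Theorem theorem1p1 (R : realType) (n : nat) (hn : (3 <= n)%N)
  (eps : 'I_n -> R) (heps : forall i, eps i = 1 \/ eps i = -1)
  (Om : set 'rV[R]_n) (hOm : open Om)
  (phi N psi : 'rV[R]_n -> R)
  (sphi : smooth_on Om phi) (sN : smooth_on Om N) (spsi : smooth_on Om psi)
  (phi_pos : forall x, Om x -> 0 < phi x)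
  (N_pos : forall x, Om x -> 0 < N x) :
  electrostatic Om (conf_metric eps phi) N psi <->
  (forall x, Om x ->
    [/\ (forall i j : 'I_n, i != j ->
          (n%:R - 2) * N x * pd i (pd j phi) x - phi x * pd i (pd j N) x
          - pd i phi x * pd j N x - pd j phi x * pd i N x
          + 2 * (phi x / N x) * pd i psi x * pd j psi x = 0),
        (forall i : 'I_n,
          phi x * ((n%:R - 2) * N x * pd i (pd i phi) x
                   - phi x * pd i (pd i N) x
                   - 2 * pd i phi x * pd i N x
                   + 2 * (phi x / N x) * (pd i psi x) ^+ 2)
          + eps i * \sum_(k < n) eps k *
              (phi x * pd k (pd k phi) x * N x
               + phi x * pd k phi x * pd k N x
               - (n%:R - 1) * N x * (pd k phi x) ^+ 2
               - 2 / ((n%:R - 1) * N x) * phi x ^+ 2 * (pd k psi x) ^+ 2)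
          = 0),
        \sum_(k < n) eps k *
           (N x * phi x * pd k (pd k psi) x
            - (n%:R - 2) * N x * pd k phi x * pd k psi x
            - phi x * pd k psi x * pd k N x) = 0 &
        \sum_(k < n) eps k *
           (phi x * N x * pd k (pd k N) x
            - (n%:R - 2) * N x * pd k phi x * pd k N x
            - Chat2 R n * phi x * (pd k psi x) ^+ 2) = 0]).

Proof. by apply: main_equiv. Qed.
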